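(* Let $S$ be a locally compact semitopological semigroup. Then $S$ has an identity element if and only if the Banach algebra $M(S)$ has an identity element of norm one.
   Context: A semitopological semigroup is a semigroup with a Hausdorff topology in which multiplication is separately continuous. For locally compact $S$, $M(S)\cong \mathcal{C}_0(S)^\ast$ is the space of complex regular Borel measures on $S$ with total variation norm, made into a Banach algebra by the convolution $\langle f,\mu\ast\nu\rangle=\int_S\int_S f(st)\,d\mu(s)\,d\nu(t)$ for $f\in\mathcal{C}_0(S)$ (the iterated integral exists and is independent of the order of integration). *)

(* Defs.v *)
From HB Require Import structures.
From mathcomp Require Import all_boot all_order all_algebra.
From mathcomp Require Import all_classical all_reals all_analysis.
From mathcomp Require Import complex.

Set Implicit Arguments.
Unset Strict Implicit.
Unset Printing Implicit Defensive.
Import Order.TTheory GRing.Theory Num.Theory.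
Import numFieldNormedType.Exports.
Local Open Scope classical_set_scope.
Local Open Scope ring_scope.

Definition semitopological_semigroup (S : topologicalType) (mul : S -> S -> S) :=
  [/\ hausdorff_space S,
      associative mul,
      (forall a : S, continuous (mul a)) &
      (forall a : S, continuous (fun x => mul x a))].

Definition has_identity (S : Type) (mul : S -> S -> S) :=
  exists e : S, forall x : S, mul e x = x /\ mul x e = x.

Definition Borel (S : ptopologicalType) := g_sigma_algebraType (@open S).

Record cmeasure (S : ptopologicalType) (R : realType) := CMeasure {
  cm_re : {charge set (Borel S) -> \bar R};
  cm_im : {charge set (Borel S) -> \bar R} }.

Section complex_measures.
Context (S : ptopologicalType) (R : realType).
Local Notation BS := (Borel S).

Definition cabs (z : R[i]) : R :=
  Num.sqrt (complex.Re z ^+ 2 + complex.Im z ^+ 2).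

Definition cmval (mu : cmeasure S R) (E : set BS) : R[i] :=
  Complex (fine (cm_re mu E)) (fine (cm_im mu E)).

Definition cvariation (mu : cmeasure S R) (E : set BS) : \bar R :=
  ereal_sup [set x : \bar R | exists (n : nat) (F : 'I_n -> set BS),
    [/\ (forall i, measurable (F i)),
        (forall i j, i != j -> F i `&` F j = set0),
        \big[setU/set0]_(i < n) F i = E &
        x = (\sum_(i < n) cabs (cmval mu (F i)))%:E]].

Definition cmnorm (mu : cmeasure S R) : \bar R := cvariation mu setT.

Definition cm_regular (mu : cmeasure S R) :=
  forall E : set BS, measurable E ->
    cvariation mu E = ereal_inf [set cvariation mu U |
                                 U in [set U : set S | open U /\ E `<=` U]] /\
    cvariation mu E = ereal_sup [set cvariation mu K |
                                 K in [set K : set S | compact K /\ K `<=` E]].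

Definition cm_eq (mu nu : cmeasure S R) :=
  forall E : set BS, measurable E ->
    cm_re mu E = cm_re nu E /\ cm_im mu E = cm_im nu E.

Definition hahn_choice (nu : {charge set BS -> \bar R}) :
  {PN : set BS * set BS | hahn_decomposition nu PN.1 PN.2}.
Proof.
apply: cid.
have [P [N h]] := Hahn_decomposition nu.
by exists (P, N).
Defined.

Definition charge_int (nu : {charge set BS -> \bar R}) (u : BS -> R) : R :=
  let h := proj2_sig (hahn_choice nu) in
  (\int[jordan_pos h]_x u x - \int[jordan_neg h]_x u x)%R.

Definition cm_int (mu : cmeasure S R) (f : S -> R[i]) : R[i] :=
  let u := fun x => complex.Re (f x) in
  let v := fun x => complex.Im (f x) in
  Complex (charge_int (cm_re mu) u - charge_int (cm_im mu) v)
          (charge_int (cm_re mu) v + charge_int (cm_im mu) u).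

End complex_measures.

Definition C0 (S : ptopologicalType) (R : realType) (f : S -> R[i]) :=
  continuous (fun x => complex.Re (f x)) /\
  continuous (fun x => complex.Im (f x)) /\
  (forall e : R, 0 < e -> exists K : set S,
     compact K /\ forall x, ~ K x -> cabs (f x) < e).

Definition is_convolution (S : ptopologicalType) (R : realType)
  (mul : S -> S -> S) (mu nu lam : cmeasure S R) :=
  forall f : S -> R[i], C0 f ->
    cm_int lam f = cm_int nu (fun t => cm_int mu (fun s => f (mul s t))).

Definition MS_has_norm_one_identity (S : ptopologicalType) (R : realType)
  (mul : S -> S -> S) :=
  exists mu : cmeasure S R,
    cm_regular mu /\ cmnorm mu = 1%E /\
    forall nu : cmeasure S R, cm_regular nu ->
      is_convolution mul mu nu nu /\ is_convolution mul nu mu nu.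

(* Main.v *)
Require Import Defs.
From HB Require Import structures.
From mathcomp Require Import all_boot all_order all_algebra.
From mathcomp Require Import all_classical all_reals all_analysis.
From mathcomp Require Import complex.
From mathcomp Require Import measurable_realfun lra.
Import Order.TTheory GRing.Theory Num.Theory.
Import numFieldNormedType.Exports.
Local Open Scope classical_set_scope.
Local Open Scope ring_scope.
Set Implicit Arguments.
Unset Strict Implicit.
Unset Printing Implicit Defensive.
Section dirac_like.
Context d (T : measurableType d) (R : realType).
Import HBNNSimple.
Local Open Scope ereal_scope.

Lemma sint_dl (m : {measure set T -> \bar R}) (a : T)
  (hm : forall A, measurable A -> m A = \d_a A) (h : {nnsfun T >-> R}) :
  sintegral m h = (h a)%:E.
Proof.
rewrite -integralT_nnsfun (eq_measure_integral (\d_a : {measure set T -> \bar R})).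
  rewrite integral_dirac//; last exact/measurable_realfun.measurable_EFinP.
  by rewrite /dirac /= indicE mem_set// mul1e.
by move=> A mA _; exact: hm.
Qed.

Lemma ge0_int_dl (m : {measure set T -> \bar R}) (a : T) (ma : measurable [set a])
  (hm : forall A, measurable A -> m A = \d_a A) (f : T -> \bar R) (r : R) :
  (forall x, 0 <= f x) -> f a = r%:E -> \int[m]_x f x = r%:E.
Proof.
move=> f0 far; rewrite ge0_integralTE//; apply/eqP; rewrite eq_le; apply/andP; split.
  apply: ub_ereal_sup => _ [h hf <-]; rewrite (sint_dl hm) -far; exact: hf.
have r0 : (0 <= r)%R by rewrite -lee_fin -far.
apply: ereal_sup_ubound; exists (scale_nnsfun (indic_nnsfun R ma) r0).
  move=> x /=; rewrite /measurable_realfun.mindic indicE; have [->|xa] := eqVneq x a.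
    by rewrite mem_set// mulr1 far.
  by rewrite memNset ?mulr0//; exact/eqP.
by rewrite (sint_dl hm)/= /measurable_realfun.mindic indicE mem_set// mulr1.
Qed.

Lemma int_dl (m : {measure set T -> \bar R}) (a : T) (ma : measurable [set a])
  (hm : forall A, measurable A -> m A = \d_a A) (g : T -> R) :
  \int[m]_x (g x)%:E = (g a)%:E.
Proof.
rewrite integralE (@ge0_int_dl m a ma hm _ (Num.max (g a) 0%R))//; last first.
  by rewrite funeposE EFin_max.
rewrite (@ge0_int_dl m a ma hm _ (Num.max (- g a)%R 0%R))//; last first.
  by rewrite funenegE EFin_max.
rewrite -EFinB; congr EFin.
have [h|h] := leP 0%R (g a).
  by rewrite (max_idPr _) ?subr0// oppr_le0.
by rewrite (max_idPl _) ?sub0r ?opprK// oppr_ge0 ltW.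
Qed.
End dirac_like.

Section meas0.
Context d (T : measurableType d) (R : realType).
Local Open Scope ereal_scope.
Lemma int_m0 (m : {measure set T -> \bar R}) (hm : forall A, measurable A -> m A = 0)
  (f : T -> \bar R) : \int[m]_x f x = 0.
Proof.
rewrite (eq_measure_integral (@mzero _ T R)) ?integral_measure_zero//.
by move=> A mA _; rewrite hm.
Qed.
End meas0.

Section borel.
Context (S : ptopologicalType) (R : realType).
Local Notation BS := (Borel S).

Lemma open_meas (U : set S) : open U -> measurable (U : set BS).
Proof. by move=> oU; exact: sub_gen_smallest. Qed.

Lemma closed_meas (U : set S) : closed U -> measurable (U : set BS).
Proof.
move=> cU; rewrite -(setCK U); apply: measurableC; apply: open_meas.
exact: closed_openC.
Qed.

Hypothesis hS : hausdorff_space S.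

Lemma set1_meas (a : S) : measurable ([set a] : set BS).
Proof. apply: closed_meas; apply: accessible_closed_set1; exact: hausdorff_accessible. Qed.

Lemma compact_meas (K : set S) : compact K -> measurable (K : set BS).
Proof. by move=> cK; apply: closed_meas; exact: compact_closed. Qed.

Definition dcm (a : S) : cmeasure S R :=
  CMeasure (charge_of_finite_measure (@dirac _ BS a R)) czero.

Lemma charge_int_czero (u : BS -> R) : charge_int (@czero _ BS R) u = 0.
Proof.
rewrite /charge_int /=.
rewrite /Rintegral !int_m0 ?subr0//.
  move=> A mA; have E := jordan_negE (proj2_sig (hahn_choice (@czero _ BS R))) A.
  by apply: eq_trans E _; rewrite cjordan_negE /crestr0; case: ifP => _; rewrite ?oppe0.
move=> A mA; have E := jordan_posE (proj2_sig (hahn_choice (@czero _ BS R))) A.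
by apply: eq_trans E _; rewrite cjordan_posE /crestr0; case: ifP.
Qed.

Lemma charge_int_dirac (a : S) (u : BS -> R) :
  charge_int (charge_of_finite_measure (@dirac _ BS a R)) u = u a.
Proof.
rewrite /charge_int /=.
case: (hahn_choice _) => -[P N] /= h.
have [[mP posP] [mN negN] PN PN0] := h.
have aP : P a.
  apply: contrapT => aP.
  have aN : N a.
    have : (P `|` N) a by rewrite PN.
    by case=> // /aP.
  have := negN [set a] (set1_meas a); rewrite /charge_of_finite_measure /= diracE mem_set// lee_fin.
  have sub : [set a] `<=` N by move=> x ->.
  by move=> /(_ sub); rewrite ler10.
have aNn : ~ N a by move=> aN; have : (P `&` N) a by []; rewrite PN0.
rewrite /Rintegral (@int_dl _ BS R _ a (set1_meas a)); last first.
  move=> A mA; have E := jordan_posE h A; apply: eq_trans E _.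
  rewrite cjordan_posE /crestr0 mem_set// /crestr /=.
  by rewrite !diracE in_setI (mem_set aP) andbT.
rewrite int_m0 ?subr0//.
move=> A mA; have E := jordan_negE h A; apply: eq_trans E _.
rewrite cjordan_negE /crestr0 mem_set// /crestr /=.
by rewrite indicE memNset ?oppr0// => -[].
Qed.

Lemma cm_int_dcm (a : S) (g : S -> R[i]) : cm_int (dcm a) g = g a.
Proof.
rewrite /cm_int /dcm /= !charge_int_dirac !charge_int_czero subr0 addr0.
by case: (g a).
Qed.

Lemma cabs_real (x : R) : cabs (Complex x 0) = `|x|.
Proof. by rewrite /cabs /= expr0n /= addr0 sqrtr_sqr. Qed.

Lemma cvar_dcm (a : S) (E : set BS) : measurable E ->
  cvariation (dcm a) E = @dirac _ BS a R E.
Proof.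
move=> mE; apply/eqP; rewrite eq_le; apply/andP; split.
  apply: ge_ereal_sup => _ [n [F [mF dF UF ->]]].
  rewrite -sumEFin -UF measure_semi_additive_ord//; last first.
    by rewrite UF.
    by apply/trivIsetP => i j _ _ /dF.
  apply: lee_sum => i _.
  rewrite /cmval /dcm /= /charge_of_finite_measure diracE.
  by rewrite cabs_real indicE ger0_norm.
apply: ereal_sup_ubound; exists 1%N, (fun _ => E); split => //.
  by move=> i j; rewrite (ord1 i) (ord1 j) eqxx.
  by rewrite big_ord1.
rewrite big_ord1 /cmval /dcm /= /charge_of_finite_measure diracE.
by rewrite cabs_real indicE ger0_norm.
Qed.

Lemma cvar_dcmE (a : S) (E : set BS) : measurable E ->
  cvariation (dcm a) E = ((a \in E)%:R)%:E.
Proof. by move=> mE; rewrite cvar_dcm// diracE. Qed.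

Lemma dcm_regular (a : S) : cm_regular (dcm a).
Proof.
move=> E mE; rewrite cvar_dcmE//; split.
  apply/eqP; rewrite eq_le; apply/andP; split.
    apply: le_ereal_inf_tmp => _ [U [oU EU] <-]; rewrite cvar_dcmE; last exact: open_meas.
    have [aE|aE] := pselect (E a); first by rewrite !mem_set//; exact: EU.
    by rewrite (memNset aE) lee_fin ler0n.
  have [aE | aE] := pselect (E a).
    rewrite mem_set//; apply: ereal_inf_lbound; exists setT; first by split; [exact: openT|].
    by rewrite cvar_dcmE// mem_set.
  rewrite memNset//; apply: ereal_inf_lbound; exists (~` [set a]).
    split; first by apply: closed_openC; apply: accessible_closed_set1; exact: hausdorff_accessible.
    by move=> x Ex xa; apply: aE; rewrite -xa.
  rewrite cvar_dcmE; last by apply: measurableC; exact: set1_meas.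
  by rewrite memNset// => /(_ erefl).
apply/eqP; rewrite eq_le; apply/andP; split.
  have [aE | aE] := pselect (E a).
    rewrite mem_set//; apply: ereal_sup_ubound; exists [set a].
      by split; [exact: compact_set1| move=> x ->].
    by rewrite cvar_dcmE ?mem_set//; exact: set1_meas.
  rewrite memNset//; apply: ereal_sup_ubound; exists set0.
    by split; [exact: compact0|].
  by rewrite cvar_dcmE ?memNset.
apply: ge_ereal_sup => _ [K [cK KE] <-]; rewrite cvar_dcmE; last exact: compact_meas.
have [aK|aK] := pselect (K a); first by rewrite !mem_set//; exact: KE.
by rewrite (memNset aK) lee_fin ler0n.
Qed.

Lemma dcm_norm (a : S) : cmnorm (dcm a) = 1%E.
Proof. by rewrite /cmnorm cvar_dcmE ?mem_set. Qed.
End borel.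

Lemma forward (R : realType) (S : ptopologicalType) (mul : S -> S -> S) :
  hausdorff_space S -> has_identity mul -> MS_has_norm_one_identity R mul.
Proof.
move=> hS [e he]; exists (dcm R e); split; first exact: dcm_regular.
split; first exact: dcm_norm.
move=> nu _; split => f _.
  congr (cm_int nu _); apply: funext => t.
  by rewrite cm_int_dcm// (he t).1.
rewrite cm_int_dcm//; congr (cm_int nu _); apply: funext => s.
by rewrite (he s).2.
Qed.
Lemma bump_ex (S : ptopologicalType) (R : realType) :
  locally_compact [set: S] -> hausdorff_space S ->
  forall (x : S) (W : set S), open W -> W x ->
  exists phi : S -> R, [/\ continuous phi, (forall y, 0 <= phi y <= 1), phi x = 1,
    (forall y, ~ W y -> phi y = 0) &
    exists C, compact C /\ forall y, ~ C y -> phi y = 0].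
Proof.
move=> lc hS x W oW Wx.
have [C nC [cC clC]] := lc x I.
have nC' : nbhs x C.
  by move: nC; rewrite /within /= => h; apply: filterS h => y; exact.
have nCW : nbhs x (C `&` W).
  by apply: filterI => //; apply: open_nbhs_nbhs; split.
pose O := (C `&` W)°.
have Ox : O x by [].
have OCW : O `<=` C `&` W by exact: interior_subset.
have cr := @locally_compact_completely_regular S R lc hS.
have : uniform_separator [set x] (~` O).
  apply: cr; first exact: (open_closedC (@open_interior _ _)).
  by move=> /(_ Ox).
move=> /(@uniform_separatorP S R) [psi [cpsi rpsi psix psiO]].
have psi0 : psi x = 0 by apply: psix; exists x.
have psi1 y : ~ O y -> psi y = 1 by move=> Oy; apply: psiO; exists y.
exists (fun y => 1 - psi y); split.
- by move=> y; apply: cvgB; [exact: cvg_cst|exact: cpsi].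
- move=> y; have := rpsi (psi y) (imageT _ y).
  rewrite /= in_itv /= => /andP[h0 h1].
  by rewrite subr_ge0 h1 lerBlDr lerDl h0.
- by rewrite psi0 subr0.
- by move=> y Wy; rewrite psi1 ?subrr// => /OCW[].
exists C; split => // y Cy; rewrite psi1 ?subrr//.
by move=> /OCW[].
Qed.
Section bump_null.
Context d (T : measurableType d) (R : realType).
Local Open Scope ereal_scope.

Lemma bump_null (m1 m2 : {measure set T -> \bar R}) (g : T -> R) (U : set T) :
  measurable_fun setT g -> (forall y, (0 <= g y <= 1)%R) -> measurable U ->
  (forall y, U y -> g y = 0%R) -> m1 setT <= 1 ->
  (fine (\int[m1]_x (g x)%:E) - fine (\int[m2]_x (g x)%:E))%R = 1%R -> m1 U = 0.
Proof.
move=> mg g01 mU gU m1T eq1.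
have mgE : measurable_fun setT (fun x => (g x)%:E) by exact/measurable_realfun.measurable_EFinP.
have miE : measurable_fun setT (fun x => (\1_U x)%:E :> \bar R).
  by apply/measurable_realfun.measurable_EFinP; exact: measurable_indic.
have g0 x : 0 <= (g x)%:E by rewrite lee_fin; case/andP: (g01 x).
have key : m1 U + \int[m1]_x (g x)%:E <= m1 setT.
  have -> : m1 U = \int[m1]_x (\1_U x)%:E by rewrite integral_indic// setIT.
  rewrite -ge0_integralD//.
  rewrite -[X in _ <= X]mul1e -integral_cst//.
  apply: ge0_le_integral => //.
  - by move=> x _; rewrite adde_ge0// lee_fin.
  - exact: emeasurable_funD.
  move=> x _; rewrite indicE /=; have [/set_mem Ux|nU] := boolP (x \in U).
    by rewrite gU// adde0.
  by rewrite add0e lee_fin; case/andP: (g01 x).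
have I2 : (0 <= fine (\int[m2]_x (g x)%:E))%R.
  by apply: fine_ge0; exact: integral_ge0.
have U0 : 0 <= m1 U by [].
have I10 : 0 <= \int[m1]_x (g x)%:E by exact: integral_ge0.
have T1 : m1 U + \int[m1]_x (g x)%:E <= 1 := le_trans key m1T.
have Ufin : m1 U \is a fin_num.
  rewrite ge0_fin_numE//; apply: (le_lt_trans _ (ltey (1:R)%:E)) => //.
  by apply: le_trans T1; rewrite leeDl.
have Ifin : \int[m1]_x (g x)%:E \is a fin_num.
  rewrite ge0_fin_numE//; apply: (le_lt_trans _ (ltey (1:R)%:E)) => //.
  by apply: le_trans T1; rewrite leeDr.
move: T1 U0; rewrite -(fineK Ufin) -(fineK Ifin) -EFinD !lee_fin => T1 U0.
congr EFin; lra.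
Qed.
End bump_null.
Section part.
Context (S : ptopologicalType) (R : realType).
Local Notation BS := (Borel S).

Definition is_part n (F : 'I_n -> set BS) (E : set BS) :=
  [/\ (forall i, measurable (F i)), (forall i j, i != j -> F i `&` F j = set0) &
      \big[setU/set0]_(i < n) F i = E].

Definition extp n (F : 'I_n -> set BS) (A : set BS) : 'I_n.+1 -> set BS :=
  fun i => if unlift ord_max i is Some j then F j else A.

Lemma extp_widen n (F : 'I_n -> set BS) A (i : 'I_n) :
  extp F A (widen_ord (leqnSn n) i) = F i.
Proof.
have -> : widen_ord (leqnSn n) i = lift ord_max i by apply: val_inj; rewrite /= /bump leqNgt ltn_ord.
by rewrite /extp liftK.
Qed.

Lemma extp_max n (F : 'I_n -> set BS) A : extp F A ord_max = A.
Proof. by rewrite /extp unlift_none. Qed.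

Lemma is_part_ext n (F : 'I_n -> set BS) E A :
  is_part F E -> measurable A -> E `&` A = set0 -> is_part (extp F A) (E `|` A).
Proof.
move=> [mF dF UF] mA EA; split.
- by move=> i; rewrite /extp; case: unliftP.
- have FE j : F j `<=` E by move=> x Fx; rewrite -UF (bigD1 j)//=; left.
  move=> i j; rewrite /extp; case: unliftP => [i' ->|->]; case: unliftP => [j' ->|->] //.
  + by move=> ij; apply: dF; apply: contra ij => /eqP ->.
  + by move=> _; apply/seteqP; split => // x [/FE Ex Ax]; rewrite -EA.
  + by move=> _; apply/seteqP; split => // x [Ax /FE Ex]; rewrite -EA.
  + by rewrite eqxx.
- by rewrite big_ord_recr /= extp_max; congr (_ `|` _); rewrite -UF; apply: eq_bigr => i _; rewrite extp_widen.
Qed.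

Lemma sum_extp (mu : cmeasure S R) n (F : 'I_n -> set BS) A :
  \sum_(i < n.+1) cabs (cmval mu (extp F A i)) =
  \sum_(i < n) cabs (cmval mu (F i)) + cabs (cmval mu A).
Proof.
by rewrite big_ord_recr /= extp_max; congr (_ + _); apply: eq_bigr => i _; rewrite extp_widen.
Qed.

Lemma part_le (mu : cmeasure S R) n (F : 'I_n -> set BS) E :
  is_part F E -> ((\sum_(i < n) cabs (cmval mu (F i)))%:E <= cvariation mu E)%E.
Proof. by move=> [mF dF UF]; apply: ereal_sup_ubound; exists n, F. Qed.

Lemma is_part1 (E : set BS) : measurable E -> is_part (fun _ : 'I_1 => E) E.
Proof.
move=> mE; split => //; first by move=> i j; rewrite (ord1 i) (ord1 j) eqxx.
by rewrite big_ord1.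
Qed.
End part.

From mathcomp Require Import finmap.
Section int_ge1.
Context d (T : measurableType d) (R : realType).
Local Open Scope ereal_scope.
Lemma int_ge1 (m1 m2 : {measure set T -> \bar R}) (g : T -> R) :
  measurable_fun setT g -> (forall y, (0 <= g y <= 1)%R) ->
  (fine (\int[m1]_x (g x)%:E) - fine (\int[m2]_x (g x)%:E))%R = 1%R -> 1 <= m1 setT.
Proof.
move=> mg g01 eq1.
have mgE : measurable_fun setT (fun x => (g x)%:E) by exact/measurable_realfun.measurable_EFinP.
have g0 x : 0 <= (g x)%:E by rewrite lee_fin; case/andP: (g01 x).
have le : \int[m1]_x (g x)%:E <= m1 setT.
  rewrite -[X in _ <= X]mul1e -integral_cst//.
  apply: ge0_le_integral => //.
  by move=> x _; rewrite lee_fin; case/andP: (g01 x).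
have I2 : (0 <= fine (\int[m2]_x (g x)%:E))%R.
  by apply: fine_ge0; exact: integral_ge0.
clear g0; move: le eq1; case: (\int[m1]_x (g x)%:E) => [r| |] /=.
- by move=> le eq1; apply: le_trans le; rewrite lee_fin; lra.
- by move=> _ eq1; exfalso; lra.
- by move=> _ eq1; exfalso; lra.
Qed.
End int_ge1.

Section back.
Context (S : ptopologicalType) (R : realType).
Local Notation BS := (Borel S).

Lemma cont_meas (f : S -> R) : continuous f -> measurable_fun setT (f : BS -> R).
Proof.
move=> /continuousP cf; apply: (measurability _ (RGenOpens.measurableE R)).
move=> _ [_ [a [b ->] <-]]; apply: measurableI => //; apply: open_meas.
exact/cf/interval_open.
Qed.

Lemma charge_int0 (nu : {charge set BS -> \bar R}) :
  charge_int nu (fun _ => 0) = 0.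
Proof. by rewrite /charge_int /Rintegral !integral0 /= subrr. Qed.

Lemma Re_cm_int (mu : cmeasure S R) (g : S -> R) :
  complex.Re (cm_int mu (fun s => Complex (g s) 0)) = charge_int (cm_re mu) g.
Proof. by rewrite /cm_int /= charge_int0 subr0. Qed.

Lemma C0_bump (phi : S -> R) : continuous phi ->
  (exists C, compact C /\ forall y, ~ C y -> phi y = 0) ->
  C0 (fun y => Complex (phi y) 0).
Proof.
move=> cphi [C [cC Cphi]]; split => //; split; first by move=> y; exact: cvg_cst.
move=> e e0; exists C; split => // y Cy.
by rewrite /cabs /= Cphi// expr0n /= addr0 sqrtr0.
Qed.

Lemma cabs_ge_Re (z : R[i]) : `|complex.Re z| <= cabs z.
Proof.
rewrite /cabs -sqrtr_sqr; apply: ler_wsqrtr.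
by rewrite lerDl sqr_ge0.
Qed.

Variable mul : S -> S -> S.
Hypotheses (hS : hausdorff_space S) (lc : locally_compact [set: S]).
Hypotheses (cl : forall a, continuous (mul a)) (cr : forall a, continuous (fun x => mul x a)).
Variable mu : cmeasure S R.
Hypotheses (mreg : cm_regular mu) (mnorm : cmnorm mu = 1%E).
Hypothesis mid : forall nu, cm_regular nu ->
  is_convolution mul mu nu nu /\ is_convolution mul nu mu nu.

Let nu1 := cm_re mu.
Let h := proj2_sig (hahn_choice nu1).
Let P := (sval (hahn_choice nu1)).1.
Let N := (sval (hahn_choice nu1)).2.
Local Notation lam := (jordan_pos h).
Local Notation lamN := (jordan_neg h).

Lemma charge_intE (g : BS -> R) :
  charge_int nu1 g = fine (\int[lam]_x (g x)%:E) - fine (\int[lamN]_x (g x)%:E).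
Proof. by []. Qed.

Lemma lamE (A : set BS) : measurable A -> lam A = nu1 (A `&` P).
Proof.
move=> mA; have E := jordan_posE h A; apply: eq_trans E _.
by rewrite cjordan_posE /crestr0 mem_set.
Qed.

Lemma mP : measurable P. Proof. by have [[]] := h. Qed.
Lemma mN : measurable N. Proof. by have [_ []] := h. Qed.
Lemma PNT : P `|` N = setT. Proof. by have [] := h. Qed.
Lemma PN0 : P `&` N = set0. Proof. by have [] := h. Qed.

Lemma cabs_ge_nu1 (A : set BS) : measurable A -> (nu1 A <= (cabs (cmval mu A))%:E)%E.
Proof.
move=> mA; rewrite -(fineK (fin_num_measure nu1 _ mA)) lee_fin.
apply: le_trans _ (cabs_ge_Re _); rewrite /cmval /=; exact: ler_norm.
Qed.

Lemma lamT_le1 : (lam setT <= 1)%E.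
Proof.
rewrite (lamE measurableT) setTI.
have hp := is_part_ext (is_part1 mP) mN PN0.
have := part_le mu hp; rewrite PNT -/(cmnorm mu) mnorm sum_extp big_ord1 EFinD.
move=> H; apply: le_trans (cabs_ge_nu1 mP) _; apply: le_trans H.
by apply: leeDl; rewrite lee_fin /cabs sqrtr_ge0.
Qed.

Lemma eqR x (phi : S -> R) : continuous phi ->
  (exists C, compact C /\ forall y, ~ C y -> phi y = 0) ->
  charge_int nu1 (fun s => phi (mul s x)) = phi x.
Proof.
move=> cphi hC; have [+ _] := mid (dcm_regular R hS x).
move=> /(_ _ (C0_bump cphi hC)); rewrite !(cm_int_dcm hS) => E.
by have := congr1 (@complex.Re R) E; rewrite Re_cm_int /= => ->.
Qed.

Lemma eqL x (phi : S -> R) : continuous phi ->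
  (exists C, compact C /\ forall y, ~ C y -> phi y = 0) ->
  charge_int nu1 (fun t => phi (mul x t)) = phi x.
Proof.
move=> cphi hC; have [_ +] := mid (dcm_regular R hS x).
move=> /(_ _ (C0_bump cphi hC)); rewrite !(cm_int_dcm hS).
set G := (fun t => _); have -> : G = (fun t => Complex (phi (mul x t)) 0).
  by apply: funext => t; rewrite /G (cm_int_dcm hS).
move=> E; by have := congr1 (@complex.Re R) E; rewrite Re_cm_int /= => ->.
Qed.

Lemma null_gen (x : S) (k : S -> S) (s : S) : continuous k -> k s != x ->
  (forall phi : S -> R, continuous phi ->
     (exists C, compact C /\ forall y, ~ C y -> phi y = 0) ->
     charge_int nu1 (fun t => phi (k t)) = phi x) ->
  exists U : set S, [/\ open U, U s & lam U = 0].
Proof.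
move=> ck ksx eqk.
move: hS; rewrite open_hausdorff => /(_ _ _ ksx) [[A B] /= [/set_mem ksA /set_mem xB]].
move=> [oA oB /eqP AB0].
have [phi [cphi phi01 phix phiW hC]] := @bump_ex S R lc hS x B oB xB.
pose U := k @^-1` A.
have oU : open U by move/continuousP : ck; apply.
exists U; split => //.
apply: (@bump_null _ _ R lam lamN (fun t => phi (k t))).
- apply: cont_meas => t; apply: continuous_comp; [exact: ck|exact: cphi].
- by move=> y; exact: phi01.
- exact: open_meas.
- move=> t Ut; apply: phiW => Bt.
  by have : (A `&` B) (k t) by []; rewrite AB0.
- exact: lamT_le1.
- by rewrite -charge_intE eqk.
Qed.

Lemma K_null (K : set S) : compact K ->
  (forall s, exists U : set S, [/\ open U, U s & lam U = 0]) -> lam K = 0.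
Proof.
move=> cK hU.
have := cK; rewrite compact_cover => /(_ _ [set U : set S | open U /\ lam U = 0] id).
case.
- by move=> U [].
- by move=> s Ks; have [U [oU Us lU]] := hU s; exists U.
move=> D' D'D KD'.
apply/eqP; rewrite eq_le measure_ge0 andbT.
have mD : forall U, U \in D' -> measurable (id U : set BS).
  by move=> U DU; have /set_mem[oU _] := D'D _ DU; exact: open_meas.
apply: le_trans (content_sub_fsum lam (finite_fset D') mD (compact_meas hS cK) KD') _.
rewrite fsbig1 // => U DU; by have /set_mem[_ lU] := D'D _ DU; exact: lU.
Qed.

Lemma lamT_ge1 : (1 <= lam setT)%E.
Proof.
have [phi [cphi phi01 phix _ hC]] := @bump_ex S R lc hS point setT openT I.
apply: (@int_ge1 _ _ R lam lamN (fun s => phi (mul s point))).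
- apply: cont_meas => t; apply: continuous_comp; [exact: cr|exact: cphi].
- by move=> y; exact: phi01.
- by rewrite -charge_intE eqR.
Qed.

Lemma nu1fin (A : set BS) : measurable A -> nu1 A = (fine (nu1 A))%:E.
Proof. by move=> mA; rewrite fineK// fin_num_measure. Qed.

Lemma exK : exists K, compact K /\ (0 < lam K)%E.
Proof.
have P1 : (1 <= nu1 P)%E by have := lamT_ge1; rewrite (lamE measurableT) setTI.
have cP : ((1/2)%:E < cvariation mu P)%E.
  apply: (@lt_le_trans _ _ 1%E); first by rewrite lte_fin; lra.
  apply: le_trans P1 (le_trans (cabs_ge_nu1 mP) _).
  by have := part_le mu (is_part1 mP); rewrite big_ord1.
rewrite (mreg mP).2 in cP.
have [_ [K [cK KP] <-] hK] := ereal_sup_gt cP.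
have [_ [n [F [mF dF UF ->]]] hF] := ereal_sup_gt hK.
have mK : measurable (K : set BS) by exact: compact_meas.
have mPK : measurable (P `\` K) by apply: measurableD => //; exact: mP.
have KPK : K `&` (P `\` K) = set0 by apply/seteqP; split => x // [Kx [_ nKx]].
have hp2 := is_part_ext (And3 mF dF UF) mPK KPK.
rewrite (setDUK KP) in hp2.
have hp3 := is_part_ext hp2 mN PN0.
have := part_le mu hp3; rewrite PNT -/(cmnorm mu) mnorm !sum_extp lee_fin.
move: hF; rewrite lte_fin => hF le1.
have cN : 0 <= cabs (cmval mu N) by exact: sqrtr_ge0.
have cPK : cabs (cmval mu (P `\` K)) < 1/2 by lra.
have := cabs_ge_nu1 mPK; rewrite (nu1fin mPK) lee_fin => hPK.
have eqP : nu1 P = (nu1 K + nu1 (P `\` K))%E.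
  by rewrite -chargeU// setDUK.
move: P1; rewrite eqP (nu1fin mK) (nu1fin mPK) -EFinD lee_fin => P1.
exists K; split => //; rewrite (lamE mK) (setIidl KP) (nu1fin mK) lte_fin; lra.
Qed.

Lemma backward : has_identity mul.
Proof.
apply: contrapT => nid.
have [K [cK lK]] := exK.
have hU : forall s, exists U : set S, [/\ open U, U s & lam U = 0].
  move=> s.
  have : ~ (forall x, mul s x = x /\ mul x s = x) by move=> H; apply: nid; exists s.
  move=> /existsNP [x /not_andP [sx|xs]].
  - apply: (null_gen (x := x) (k := fun t => mul t x) (@cr x)); first exact/eqP.
    by move=> phi cphi hC; exact: eqR.
  - apply: (null_gen (x := x) (k := mul x) (@cl x)); first exact/eqP.
    by move=> phi cphi hC; exact: eqL.
by move: lK; rewrite (K_null cK hU) ltxx.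
Qed.
End back.

Unset Implicit Arguments.

Theorem proposition2p1 (R : realType) (S : ptopologicalType) (mul : S -> S -> S) :
  semitopological_semigroup mul ->
  locally_compact [set: S] ->
  has_identity mul <-> MS_has_norm_one_identity R mul.
Proof.
move=> [hS _ cl cr] lc; split; first exact: forward.
move=> [mu [mreg [mnorm mid]]].
exact: (@backward S R mul hS lc cl cr mu mreg mnorm mid).
Qed.
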